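(* Let $Q\subset\mathrm{EX}(M)$ be a set of pairwise compatible extensions. Then $Q(M)$ is Hausdorff.
   Context: Conventions: $M$ is an $n$-dimensional smooth manifold (Hausdorff, second countable) with maximal $C^\infty$ atlas $\mathcal{A}(M)$; every chart $\alpha$ has open domain $\mathrm{dom}(\alpha)\subset M$ and open range $\mathrm{ran}(\alpha)\subset\mathbb{R}^n$. For $A\subset\mathbb{R}^n$, $\partial A$ is its boundary in $\mathbb{R}^n$; for $A\subset U\subset\mathbb{R}^n$, $\partial_U A$ is the boundary of $A$ relative to $U$. An admissible boundary point of $\alpha$ is a $p\in\partial\,\mathrm{ran}(\alpha)$ such that every sequence $(x_i)\subset\mathrm{dom}(\alpha)$ with $\alpha(x_i)\to p$ has no accumulation point in $M$; $B(\alpha)$ is the set of these. An extension is a pair $(\alpha,U)$, $U\subset\mathbb{R}^n$ open, $\mathrm{ran}(\alpha)\subset U$, $\emptyset\ne\partial_U\mathrm{ran}(\alpha)\subset B(\alpha)$; $\mathrm{EX}(M)$ is the set of extensions. A boundary set is $(\alpha,U,V)$ with $(\alpha,U)\in\mathrm{EX}(M)$, $V\subset B(\alpha)\cap U$ (a boundary point if $V=\{p\}$). $(\alpha,U,V)$ covers $(\beta,X,Y)$ if for every sequence $(y_i)\subset\mathrm{dom}(\beta)$ with $(\beta(y_i))$ having an accumulation point in $Y$ there is a subsequence $(v_i)\subset\mathrm{dom}(\alpha)$ of $(y_i)$ with $(\alpha(v_i))$ having an accumulation point in $V$; they are equivalent, $\equiv$, if each covers the other. Boundary points $(\alpha,U,\{p\})$,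 $(\beta,X,\{q\})$ are in contact if there is a sequence $(x_i)\subset\mathrm{dom}(\alpha)\cap\mathrm{dom}(\beta)$ with $\alpha(x_i)\to p$ and $\beta(x_i)\to q$. Extensions $(\alpha,U)$, $(\beta,X)$ are compatible if for all $p\in B(\alpha)\cap U$, $q\in B(\beta)\cap X$, being in contact implies $(\alpha,U,\{p\})\equiv(\beta,X,\{q\})$. Completion: for $Q\subset\mathrm{EX}(M)$ let $P=\{(\alpha,\mathrm{ran}(\alpha)):\alpha\in\mathcal{A}(M)\}$, $S_Q=P\cup Q$, $N_{(\alpha,U)}=\mathrm{ran}(\alpha)\cup\partial_U\mathrm{ran}(\alpha)$ with subspace topology of $\mathbb{R}^n$, $N_Q=\bigsqcup_{(\alpha,U)\in S_Q}N_{(\alpha,U)}$ with disjoint-union topology. Identify $x\in N_{(\alpha,U)}$ with $y\in N_{(\beta,X)}$ iff either $x\in\mathrm{ran}(\alpha)$, $y\in\mathrm{ran}(\beta)$, $\beta\circ\alpha^{-1}(x)=y$, or $x\in\partial_U\mathrm{ran}(\alpha)$, $y\in\partial_X\mathrm{ran}(\beta)$, $(\alpha,U,\{x\})\equiv(\beta,X,\{y\})$. $Q(M)$ is the quotient space with the quotient topology. *)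

(* Defs.v *)
From HB Require Import structures.
From mathcomp Require Import all_boot all_order all_algebra.
From mathcomp Require Import all_classical all_reals all_analysis.
From Stdlib Require Import Relations.
Set Implicit Arguments. Unset Strict Implicit. Unset Printing Implicit Defensive.
Import Order.TTheory GRing.Theory Num.Theory.
Import numFieldNormedType.Exports.
Local Open Scope classical_set_scope.
Local Open Scope ring_scope.

Section Manifold.
Context {R : realType} {n : nat} {M : topologicalType}.

Notation E := 'rV[R]_n.

Definition chart := (set M * (M -> E))%type.
Definition dom (c : chart) : set M := c.1.
Definition ran (c : chart) : set E := c.2 @` c.1.

(** c is a topological chart: homeomorphism from an open subset of M onto an
    open subset of R^n. *)
Definition is_chart (c : chart) : Prop :=
  [/\ open (dom c), open (ran c),
      (forall x y, dom c x -> dom c y -> c.2 x = c.2 y -> x = y),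
      {within dom c, continuous c.2} &
      (forall O, open O -> O `<=` dom c -> open (c.2 @` O))].

Fixpoint Ck (k : nat) (U : set E) (g : E -> E) : Prop :=
  match k with
  | 0 => {within U, continuous g}
  | k'.+1 => (forall x, U x -> differentiable g x) /\
             (forall v : E, Ck k' U (fun x => 'D_v g x))
  end.
Definition smooth_on (U : set E) (g : E -> E) := forall k, Ck k U g.

(** The transition map beta o alpha^{-1} (on alpha(dom alpha /\ dom beta)). *)
Definition transition (a b : chart) (x : E) : E :=
  xget 0 [set y | exists m, [/\ dom a m, dom b m, a.2 m = x & b.2 m = y]].

Definition smooth_compat (a b : chart) : Prop :=
  smooth_on (a.2 @` (dom a `&` dom b)) (transition a b) /\
  smooth_on (b.2 @` (dom a `&` dom b)) (transition b a).

Definition smooth_atlas (A : set chart) : Prop :=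
  [/\ (forall c, A c -> is_chart c),
      (forall x : M, exists2 c, A c & dom c x) &
      (forall a b, A a -> A b -> smooth_compat a b)].

Definition maximal_atlas (A : set chart) : Prop :=
  smooth_atlas A /\
  (forall c, is_chart c -> (forall d, A d -> smooth_compat c d) -> A c).

Definition bdry (S : set E) : set E := closure S `\` interior S.
Definition rel_bdry (U S : set E) : set E := (closure S `&` U) `\` interior S.

Definition acc_pts {T : topologicalType} (u : nat -> T) : set T :=
  cluster (u @ \oo).

Definition adm_bdry (a : chart) : set E :=
  [set p | bdry (ran a) p /\
    forall x : nat -> M, (forall i, dom a (x i)) ->
      (a.2 \o x @ \oo --> p) -> acc_pts x = set0].

Definition extension := (chart * set E)%type.
Definition EX (A : set chart) : set extension :=
  [set e | [/\ A e.1, open e.2, ran e.1 `<=` e.2,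
              rel_bdry e.2 (ran e.1) !=set0 &
              rel_bdry e.2 (ran e.1) `<=` adm_bdry e.1]].

Definition bset := (chart * set E * set E)%type.

Definition covers (s t : bset) : Prop :=
  let: (a, _, V) := s in let: (b, _, Y) := t in
  forall y : nat -> M, (forall i, dom b (y i)) ->
    (exists2 q, Y q & acc_pts (b.2 \o y) q) ->
    exists phi : nat -> nat, (forall i, (phi i < phi i.+1)%N) /\
      (forall i, dom a (y (phi i))) /\
      exists2 p, V p & acc_pts (a.2 \o (y \o phi)) p.

Definition bequiv (s t : bset) : Prop := covers s t /\ covers t s.

Definition in_contact (a : chart) (p : E) (b : chart) (q : E) : Prop :=
  exists x : nat -> M, [/\ (forall i, dom a (x i) /\ dom b (x i)),
    a.2 \o x @ \oo --> p & b.2 \o x @ \oo --> q].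

Definition compatible (e f : extension) : Prop :=
  forall p q, adm_bdry e.1 p -> e.2 p -> adm_bdry f.1 q -> f.2 q ->
    in_contact e.1 p f.1 q -> bequiv (e.1, e.2, [set p]) (f.1, f.2, [set q]).

(** The completion Q(M).  Points of the disjoint union N_Q are triples
    (alpha, U, x) with (alpha, U) in S_Q and x in N_(alpha,U). *)
Definition SQ (A : set chart) (Q : set extension) : set extension :=
  [set e | (A e.1 /\ e.2 = ran e.1) \/ Q e].

Definition Nset (e : extension) : set E := ran e.1 `|` rel_bdry e.2 (ran e.1).

Definition NQ (A : set chart) (Q : set extension) : set (extension * E) :=
  [set z | SQ A Q z.1 /\ Nset z.1 z.2].

(** Open sets of the disjoint union topology on N_Q. *)
Definition NQ_open (A : set chart) (Q : set extension) (W : set (extension * E)) :=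
  W `<=` NQ A Q /\
  forall e, SQ A Q e -> exists2 O : set E, open O &
    [set x | W (e, x)] = O `&` Nset e.

Definition ident (z w : extension * E) : Prop :=
  let: ((a, U), x) := z in let: ((b, X), y) := w in
  (ran a x /\ ran b y /\
     exists m, [/\ dom a m, dom b m, a.2 m = x & b.2 m = y]) \/
  (rel_bdry U (ran a) x /\ rel_bdry X (ran b) y /\
     bequiv (a, U, [set x]) (b, X, [set y])).

(** Q(M) is Hausdorff (for the quotient topology): distinct classes are
    separated by disjoint open sets of Q(M), i.e. (taking preimages under the
    quotient map) by disjoint open saturated subsets of N_Q. *)
Definition saturated {X : Type} (r : relation X) (W : set X) :=
  forall a b, r a b -> W a -> W b.

Definition QM_hausdorff (A : set chart) (Q : set extension) : Prop :=
  let r := fun z w => NQ A Q z /\ NQ A Q w /\ ident z w in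
  let req := clos_refl_sym_trans _ r in
  forall z w, NQ A Q z -> NQ A Q w -> ~ req z w ->
    exists W1 W2, [/\ NQ_open A Q W1, NQ_open A Q W2,
      saturated req W1, saturated req W2 &
      [/\ W1 z, W2 w & W1 `&` W2 = set0]].

End Manifold.

(* Main.v *)
Require Import Defs.
From HB Require Import structures.
From mathcomp Require Import all_boot all_order all_algebra.
From mathcomp Require Import all_classical all_reals all_analysis.
From Stdlib Require Import Relations.
Import Order.TTheory GRing.Theory Num.Theory.
Import numFieldNormedType.Exports.
Local Open Scope classical_set_scope.
Local Open Scope ring_scope.
Set Implicit Arguments. Unset Strict Implicit.

Lemma cvg_clusterP {T : topologicalType} (F : set_system T) {FF : ProperFilter F} p :
  F --> p -> cluster F p.
Proof.
move=> Fp A B FA nB; have FB : F B by apply: Fp.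
exact: (filter_ex (filterI FA FB)).
Qed.

Lemma seq2 (R : realType) (T : Type) (E1 E2 : pseudoMetricType R) (P : T -> Prop)
  (g : T -> E1) (h : T -> E2) p q :
  (forall eps : R, 0 < eps -> exists m, [/\ P m, ball p eps (g m) & ball q eps (h m)]) ->
  exists x : nat -> T, [/\ forall i, P (x i), g \o x @ \oo --> p & h \o x @ \oo --> q].
Proof.
move=> H.
have /choice [x Hx] : forall k : nat, exists m, [/\ P m, ball p k.+1%:R^-1 (g m)
   & ball q k.+1%:R^-1 (h m)].
  by move=> k; apply: H; rewrite invr_gt0 ltr0Sn.
exists x; split; first by move=> i; case: (Hx i).
- apply/cvg_ballP => eps e0; near=> k; case: (Hx k) => _ + _.
  apply: le_ball; apply: ltW; near: k; exact: (near_infty_natSinv_lt (PosNum e0)).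
- apply/cvg_ballP => eps e0; near=> k; case: (Hx k) => _ _.
  apply: le_ball; apply: ltW; near: k; exact: (near_infty_natSinv_lt (PosNum e0)).
Unshelve. all: by end_near.
Qed.

Lemma eps_sep (R : realType) (T : Type) (E1 E2 : pseudoMetricType R) (P : T -> Prop)
  (g : T -> E1) (h : T -> E2) p q :
  ~ (exists x : nat -> T, [/\ forall i, P (x i), g \o x @ \oo --> p & h \o x @ \oo --> q]) ->
  exists2 eps : R, 0 < eps & forall m, P m -> ball p eps (g m) -> ball q eps (h m) -> False.
Proof.
move=> hn; apply: contrapT => hn2; apply: hn; apply: seq2 => eps e0.
apply: contrapT => hm; apply: hn2; exists eps => // m Pm b1 b2; apply: hm.
by exists m; split.
Qed.

Section S.
Variables (R : realType) (n : nat) (M : topologicalType).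
Variables (A : set (@chart R n M)) (Q : set (@extension R n M)).
Hypothesis HA : maximal_atlas A.
Hypothesis HQ : Q `<=` EX A.
Local Notation E := 'rV[R]_n.

Lemma isc (c : chart) : A c -> is_chart c.
Proof. by case: HA => -[+ _ _] _; apply. Qed.

Lemma chartA (e : extension) : SQ A Q e -> A e.1.
Proof. by case=> [[]//|/HQ[]]. Qed.

Lemma chart_nbhs (c : @chart R n M) m S : is_chart c -> dom c m -> nbhs m S ->
  exists V : set E, [/\ open V, V (c.2 m) & forall m', dom c m' -> V (c.2 m') -> S m'].
Proof.
case=> odom _ inj _ omap Dm; rewrite nbhsE => -[B [oB Bm] BS].
exists (c.2 @` (B `&` dom c)); split.
- by apply: omap; [exact: openI | move=> ? []].
- by exists m.
- by move=> m' Dm' [m'' [Bm'' Dm''] e]; apply: BS; rewrite -(inj _ _ Dm'' Dm' e).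
Qed.

Lemma chart_pre (c : @chart R n M) (V : set E) : is_chart c -> open V ->
  open (dom c `&` c.2 @^-1` V).
Proof.
case=> odom _ _ cont _ oO; move: cont; rewrite continuous_open_subspace// => cont.
exact: ((continuous_inP _ odom).1 cont V oO).
Qed.

Lemma chart_cvg (c : @chart R n M) m (s : nat -> M) : is_chart c -> dom c m ->
  (forall k, dom c (s k)) -> c.2 \o s @ \oo --> c.2 m -> s @ \oo --> m.
Proof.
move=> cc Dm Ds cv S nS; have [V [oO Om H]] := chart_nbhs cc Dm nS.
have : (c.2 \o s @ \oo) V by apply: cv; apply: open_nbhs_nbhs.
move=> hV; rewrite /= in hV *.
by apply: (@filterS _ _ _ _ _ _ hV) => k /= Vk; exact: H.
Qed.


Definition Wset (G : set M) : set (@extension R n M * E) :=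
  [set z | NQ A Q z /\ exists V : set E,
     [/\ open V, V z.2 & forall m, dom z.1.1 m -> V (z.1.1.2 m) -> G m]].

Lemma Wset_open G : NQ_open A Q (Wset G).
Proof.
split; first by move=> z [].
move=> e SQe.
exists [set x | exists V : set E,
     [/\ open V, V x & forall m, dom e.1 m -> V (e.1.2 m) -> G m]].
- rewrite openE => x [V [oV Vx H]].
  have nV : nbhs x V by apply: open_nbhs_nbhs.
  by apply: (@filterS _ _ _ _ _ _ nV) => y Vy; exists V.
- apply/seteqP; split => x /=.
  + by move=> [[_ Nx] ex].
  + by move=> [ex Nx].
Qed.

Lemma ident_sym (z w : @extension R n M * E) : ident z w -> ident w z.
Proof.
move: z w => [[a U] x] [[b X] y] /= [[rx [ry [m [? ? ? ?]]]]|[bx [by' [c1 c2]]]].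
- by left; split => //; split => //; exists m.
- by right; split => //; split => //; split.
Qed.

Lemma Wset_step G z w : NQ A Q z -> NQ A Q w -> ident z w -> Wset G z -> Wset G w.
Proof.
move: z w => [[a U] x] [[b X] y] Nz Nw idzw [_ [V [oV Vx H]]]; split => //.
have ca : is_chart a by apply: isc; exact: (chartA Nz.1).
have cb : is_chart b by apply: isc; exact: (chartA Nw.1).
move: idzw => /= [[rx [ry [m [Dam Dbm amx bmy]]]]|[bx [by' [cov _]]]].
- have nS : nbhs m (dom a `&` a.2 @^-1` V).
    by apply: open_nbhs_nbhs; split; [exact: chart_pre | split; rewrite //= amx].
  have [V' [oV' V'y H']] := chart_nbhs cb Dbm nS.
  exists V'; split => //; first by rewrite -bmy.
  by move=> m' Dbm' /(H' _ Dbm') [Dam' Vm']; exact: H.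
- apply: contrapT => nW.
  have key : forall eps : R, 0 < eps -> exists m, [/\ dom b m /\ ~ G m,
      ball y eps (b.2 m) & ball y eps (b.2 m)].
    move=> eps e0; apply: contrapT => nm; apply: nW.
    exists (ball y eps); split; [exact: ball_open | exact: ballxx |].
    move=> m Dm By; apply: contrapT => nG; apply: nm; exists m; split => //.
  have [s [Ps cv _]] := seq2 key.
  have Ds : forall i, dom b (s i) by move=> i; case: (Ps i).
  have [phi [_ [Dphi [p px clp]]]] := cov s Ds (ex_intro2 _ _ y erefl (cvg_clusterP cv)).
  rewrite /= in px; subst p.
  have nV : nbhs x V by apply: open_nbhs_nbhs.
  have Fr : \forall k \near \oo,
      range (a.2 \o (s \o phi)) ((a.2 \o (s \o phi)) k).
    by apply: nearW => k; exists k.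
  have [y' [[i _ <-] Vi]] := clp _ V Fr nV.
  by case: (Ps (phi i)) => _; apply; apply: H => //; exact: Dphi.
Qed.

Lemma Wset_sat G : saturated (clos_refl_sym_trans _
   (fun z w => NQ A Q z /\ NQ A Q w /\ ident z w)) (Wset G).
Proof.
move=> z0 w0 h; suff: Wset G z0 <-> Wset G w0 by case.
elim: h => {z0 w0} [z w [Nz [Nw i]]|z|z w _ [h1 h2]|z w v _ [h1 h2] _ [h3 h4]].
- by split; [exact: Wset_step | exact: (Wset_step Nw Nz (ident_sym i))].
- by [].
- by split.
- by split => ?; [apply: h3; apply: h1 | apply: h2; apply: h4].
Qed.

Lemma Wset_disj G1 G2 : G1 `&` G2 = set0 -> Wset G1 `&` Wset G2 = set0.
Proof.
move=> HG; rewrite -subset0 => z [[[_ Nx] ex1] [_ ex2]].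
case: ex1 => V1 [op1 xv1 H1]; case: ex2 => V2 [op2 xv2 H2].
have cl : closure (ran z.1.1) z.2.
  by case: Nx => [/subset_closure|[[]]].
have nV : nbhs z.2 (V1 `&` V2) by apply: open_nbhs_nbhs; split; [exact: openI|].
have [y [[m Dm <-] [y1 y2]]] := cl _ nV.
have : (G1 `&` G2) m by split; [apply: H1 | apply: H2].
by rewrite HG.
Qed.


Lemma sep_gen (z w : @extension R n M * E) G1 G2 (V1 V2 : set E) :
  G1 `&` G2 = set0 ->
  open V1 -> V1 z.2 -> (forall m, dom z.1.1 m -> V1 (z.1.1.2 m) -> G1 m) ->
  open V2 -> V2 w.2 -> (forall m, dom w.1.1 m -> V2 (w.1.1.2 m) -> G2 m) ->
  NQ A Q z -> NQ A Q w ->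
  exists W1 W2, [/\ NQ_open A Q W1, NQ_open A Q W2,
    saturated (clos_refl_sym_trans _
      (fun z w => NQ A Q z /\ NQ A Q w /\ ident z w)) W1,
    saturated (clos_refl_sym_trans _
      (fun z w => NQ A Q z /\ NQ A Q w /\ ident z w)) W2 &
    [/\ W1 z, W2 w & W1 `&` W2 = set0]].
Proof.
move=> dis oV1 V1z H1 oV2 V2w H2 Nz Nw.
exists (Wset G1), (Wset G2); split; try exact: Wset_open; try exact: Wset_sat.
split; last exact: Wset_disj.
- by split => //; exists V1.
- by split => //; exists V2.
Qed.

Lemma sep_eps (z w : @extension R n M * E) (eps : R) :
  NQ A Q z -> NQ A Q w -> 0 < eps ->
  (forall m, dom z.1.1 m -> dom w.1.1 m -> ball z.2 eps (z.1.1.2 m) ->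
     ball w.2 eps (w.1.1.2 m) -> False) ->
  exists W1 W2, [/\ NQ_open A Q W1, NQ_open A Q W2,
    saturated (clos_refl_sym_trans _
      (fun z w => NQ A Q z /\ NQ A Q w /\ ident z w)) W1,
    saturated (clos_refl_sym_trans _
      (fun z w => NQ A Q z /\ NQ A Q w /\ ident z w)) W2 &
    [/\ W1 z, W2 w & W1 `&` W2 = set0]].
Proof.
move=> Nz Nw e0 H.
apply: (@sep_gen z w [set m | dom z.1.1 m /\ ball z.2 eps (z.1.1.2 m)]
  [set m | dom w.1.1 m /\ ball w.2 eps (w.1.1.2 m)] (ball z.2 eps) (ball w.2 eps))
  => //; try exact: ball_open; try exact: ballxx.
by rewrite -subset0 => m [[D1 B1] [D2 B2]]; exact: H m D1 D2 B1 B2.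
Qed.

Lemma bdryQ (e : @extension R n M) x : SQ A Q e -> rel_bdry e.2 (ran e.1) x -> Q e.
Proof.
case=> [[Ae e2]|//] [[_ Ux] nint]; exfalso; apply: nint.
have [_ oran _ _ _] := isc Ae.
rewrite e2 in Ux; exact: open_nbhs_nbhs.
Qed.

Lemma bdry_adm (e : @extension R n M) x : Q e -> rel_bdry e.2 (ran e.1) x ->
  adm_bdry e.1 x.
Proof. by move=> /HQ [_ _ _ _ sub] /sub. Qed.

Hypothesis HM : hausdorff_space M.
Hypothesis Hcomp : forall e f, Q e -> Q f -> compatible e f.

Lemma main_sec : QM_hausdorff A Q.
Proof.
move=> z w Nz Nw nr.
move: z w Nz Nw nr => [[a U] x] [[b X] y] Nz Nw nr.
have [SQz Nxz] := Nz; have [SQw Nyw] := Nw.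
have ca : is_chart a := isc (chartA SQz).
have cb : is_chart b := isc (chartA SQw).
case: Nxz => [[m1 Dm1 am1]|Bz]; case: Nyw => [[m2 Dm2 bm2]|Bw].
- simpl in am1, bm2; subst x y; case: (pselect (m1 = m2)) => [e|ne].
    subst m2; exfalso; apply: nr; apply: rst_step; split => //; split => //.
    by left; split; [by exists m1|split; [by exists m1|exists m1; split]].
  have ncl : ~ cluster (nbhs m1) m2 by move/HM.
  have [S1 [S2 [n1 n2 dis]]] :
      exists S1 S2, [/\ nbhs m1 S1, nbhs m2 S2 & S1 `&` S2 = set0].
    apply: contrapT => h0; apply: ncl => S1 S2 n1 n2; apply: contrapT => h1.
    apply: h0; exists S1, S2; split => //; rewrite -subset0 => t St; apply: h1.
    by exists t.
  have [V1 [oV1 V1x H1]] := chart_nbhs ca Dm1 n1.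
  have [V2 [oV2 V2y H2]] := chart_nbhs cb Dm2 n2.
  exact: (@sep_gen (a, U, a.2 m1) (b, X, b.2 m2) _ _ _ _ dis oV1 V1x H1 oV2 V2y H2 Nz Nw).
- have Qw := bdryQ SQw Bw; have admw := bdry_adm Qw Bw.
  have [eps e0 H] : exists2 eps : R, 0 < eps & forall m, dom a m /\ dom b m ->
      ball (a.2 m1) eps (a.2 m) -> ball y eps (b.2 m) -> False.
    apply: eps_sep => -[s [Ps cv1 cv2]].
    have sm := chart_cvg ca Dm1 (fun i => (Ps i).1) cv1.
    have h := admw.2 s (fun i => (Ps i).2) cv2.
    have : acc_pts s m1 by exact: cvg_clusterP.
    by rewrite h.
  simpl in am1; subst x; apply: (sep_eps Nz Nw e0) => m /= Da Db B1 B2.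
  exact: H m (conj Da Db) B1 B2.
- have Qz := bdryQ SQz Bz; have admz := bdry_adm Qz Bz.
  have [eps e0 H] : exists2 eps : R, 0 < eps & forall m, dom b m /\ dom a m ->
      ball (b.2 m2) eps (b.2 m) -> ball x eps (a.2 m) -> False.
    apply: eps_sep => -[s [Ps cv1 cv2]].
    have sm := chart_cvg cb Dm2 (fun i => (Ps i).1) cv1.
    have h := admz.2 s (fun i => (Ps i).2) cv2.
    have : acc_pts s m2 by exact: cvg_clusterP.
    by rewrite h.
  simpl in bm2; subst y; apply: (sep_eps Nz Nw e0) => m /= Da Db B1 B2.
  exact: H m (conj Db Da) B2 B1.
- have Qz := bdryQ SQz Bz; have admz := bdry_adm Qz Bz.
  have Qw := bdryQ SQw Bw; have admw := bdry_adm Qw Bw.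
  have nc : ~ in_contact a x b y.
    move=> ic; apply: nr; apply: rst_step; split => //; split => //.
    right; split => //; split => //.
    exact: (Hcomp Qz Qw admz Bz.1.2 admw Bw.1.2 ic).
  have [eps e0 H] : exists2 eps : R, 0 < eps & forall m, dom a m /\ dom b m ->
      ball x eps (a.2 m) -> ball y eps (b.2 m) -> False.
    by apply: eps_sep => -[s [Ps cv1 cv2]]; apply: nc; exists s; split.
  apply: (sep_eps Nz Nw e0) => m /= Da Db B1 B2.
  exact: H m (conj Da Db) B1 B2.
Qed.

End S.

Theorem mainTheorem8 (R : realType) (n : nat) (M : topologicalType)
  (A : set (@chart R n M))
  (HM : hausdorff_space M) (HM2 : @second_countable M) (HA : maximal_atlas A)
  (Q : set (@extension R n M)) (HQ : Q `<=` EX A)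
  (Hcomp : forall e f, Q e -> Q f -> compatible e f) :
  QM_hausdorff A Q.
Proof. exact: (main_sec HA HQ HM Hcomp). Qed.
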